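(* For every $c_*\in(0,1/8]$ there exist constants $C,c,c'>0$ (depending only on $c_*$, $s$ and the $\lambda_i$) such that the following holds. Let $\varepsilon,\delta\in(0,1]$, $\nu>0$, $R\geq1$, frequencies $\mathbf{z}_1,\dots,\mathbf{z}_R\in\mathbb{Z}_M\times\mathbb{Z}_{M^2}$ with phases $\phi_1,\dots,\phi_R$, assume $N\geq(2/(\varepsilon\delta))^{CR^3}$, and let $(q,U,V,(r_n),P,(Q_n))$ be a linearization system with parameter $c_*$ for $(\varepsilon,\delta,\phi_1,\dots,\phi_R)$, with associated smoothing $h\mapsto\widetilde h$. Let $A\subseteq[N]$ have density $\delta=|A|/N$ and suppose $$\Big\|\frac{\widetilde{f_A}}{\delta}\Big\|_{L^2(N)}^2\geq\nu.$$ If $\varepsilon\leq c\,\nu\delta$, then there exists an arithmetic progression $Q\subseteq[N]$ such that $$\frac{|A\cap Q|}{|Q|}\geq(1+\nu/2)\,\delta,\qquad |Q|\geq N^{c'/R^3}.$$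
   Context: $[N]=\{1,\dots,N\}$, $\|x\|$ is the distance from $x$ to the nearest integer. $M$ is a prime with $Y\leq M\leq 2Y$, $Y=2(|\lambda_1|+\dots+|\lambda_s|)N$, for fixed nonzero integers $\lambda_1,\dots,\lambda_s$. For $\mathbf{z}_i=(x_i,y_i)$, $\phi_i(n)=\frac{x_i}{M}n+\frac{y_i}{M^2}n^2$. $f_A=1_A-\delta1_{[N]}$ and $\|g\|_{L^2(N)}=\big(\frac1N\sum_{n=1}^N|g(n)|^2\big)^{1/2}$. An arithmetic progression is a set $\{u+dj:j\in[L]\}$ with integers $u$, $d\geq1$, $L\geq1$. A linearization system with parameter $c_*$ for $(\varepsilon,\delta,\phi_1,\dots,\phi_R)$ consists of integers $q\geq1$, $U,V\geq1$, $r_n\geq1$ ($n\in\mathbb{Z}$) with $N^{c_*/R^2}\leq U\leq 2N^{c_*/R^2}$, $U^{c_*/R}\leq V\leq 2U^{c_*/R}$, $q\leq N^{1/4}$, $r_n\leq U^{1/4}$, together with $P=\{q,2q,\dots,Uq\}$ and $Q_n=\{qr_n,2qr_n,\dots,Vqr_n\}$, such that $\|\phi_i(n+m+k)-\phi_i(n+m)\|\leq\varepsilon\delta$ for all $n\in[N]$, $m\in P$, $k\in Q_n$, $i\in[R]$. The associated smoothing of $h:\mathbb{Z}\to\mathbb{C}$ supported in $[N]$ is $\widetilde h:[N]\to\mathbb{C}$, $\widetilde h(n)=\frac{1}{|P|}\sum_{m\in P}\frac{1}{|Q_{n-m}|}\sum_{k\in Q_{n-m}}h(n+k)$. *)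

(* Defs.v *)
From Stdlib Require Import Reals ZArith Znumtheory List.
Open Scope R_scope.

Fixpoint rsum (n : nat) (f : nat -> R) : R :=
  match n with
  | O => 0
  | S k => rsum k f + f (S k)
  end.

(* floor x = up x - 1, since x < up x <= x + 1 *)
Definition floorR (x : R) : Z := (up x - 1)%Z.

Definition dist_nint (x : R) : R :=
  Rmin (x - IZR (floorR x)) (IZR (floorR x) + 1 - x).

Definition indR (b : bool) : R := if b then 1 else 0.

Definition inN (N : nat) (n : Z) : bool :=
  ((1 <=? n)%Z && (n <=? Z.of_nat N)%Z)%bool.

Definition phase (M x y : Z) (n : Z) : R :=
  IZR x / IZR M * IZR n + IZR y / (IZR M ^ 2) * IZR n ^ 2.

Definition cardA (A : Z -> bool) (N : nat) : R :=
  rsum N (fun j => indR (A (Z.of_nat j))).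

(* f_A = 1_A - delta 1_[N], supported in [N] *)
Definition balanced (A : Z -> bool) (N : nat) (delta : R) (n : Z) : R :=
  if inN N n then indR (A n) - delta else 0.

(* Linearization system with parameter cstar for (eps, delta, phi_1..phi_R).
   P = {q, 2q, ..., Uq}, Q_n = {q r_n, 2 q r_n, ..., V q r_n}. *)
Definition linearization_system (cstar eps delta : R) (Rn : nat) (N : nat)
    (phi : nat -> Z -> R) (q U V : nat) (r : Z -> nat) : Prop :=
  (1 <= q)%nat /\ (1 <= U)%nat /\ (1 <= V)%nat /\
  (forall n : Z, (1 <= r n)%nat) /\
  Rpower (INR N) (cstar / INR Rn ^ 2) <= INR U /\
  INR U <= 2 * Rpower (INR N) (cstar / INR Rn ^ 2) /\
  Rpower (INR U) (cstar / INR Rn) <= INR V /\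
  INR V <= 2 * Rpower (INR U) (cstar / INR Rn) /\
  INR q <= Rpower (INR N) (1 / 4) /\
  (forall n : Z, INR (r n) <= Rpower (INR U) (1 / 4)) /\
  (forall (n : Z) (jm jk i : nat),
      (1 <= n <= Z.of_nat N)%Z ->
      (1 <= jm <= U)%nat -> (1 <= jk <= V)%nat -> (1 <= i <= Rn)%nat ->
      let m := Z.of_nat (q * jm) in
      let k := Z.of_nat (q * r n * jk) in
      dist_nint (phi i (n + m + k)%Z - phi i (n + m)%Z) <= eps * delta).

Definition smoothing (q U V : nat) (r : Z -> nat) (h : Z -> R) (n : Z) : R :=
  (1 / INR U) * rsum U (fun jm =>
     let m := Z.of_nat (q * jm) in
     (1 / INR V) * rsum V (fun jk =>
        h (n + Z.of_nat (q * r (n - m)%Z * jk))%Z)).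

Definition L2norm (N : nat) (g : Z -> R) : R :=
  sqrt ((1 / INR N) * rsum N (fun j => Rabs (g (Z.of_nat j)) ^ 2)).

Definition sum_absZ (lam : list Z) : Z :=
  fold_right (fun a acc => (Z.abs a + acc)%Z) 0%Z lam.

(* Main.v *)
Require Import Defs.
From Stdlib Require Import Reals ZArith Znumtheory List Lra Lia Classical.
Open Scope R_scope.

Lemma rsum_ext n f g : (forall j, (1 <= j <= n)%nat -> f j = g j) -> rsum n f = rsum n g.
Proof.
  induction n; intros H; simpl; auto.
  rewrite IHn by (intros; apply H; lia). rewrite H by lia. reflexivity.
Qed.

Lemma rsum_plus n f g : rsum n (fun j => f j + g j) = rsum n f + rsum n g.
Proof. induction n; simpl; [lra|]. rewrite IHn; lra. Qed.

Lemma rsum_minus n f g : rsum n (fun j => f j - g j) = rsum n f - rsum n g.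
Proof. induction n; simpl; [lra|]. rewrite IHn; lra. Qed.

Lemma rsum_scal n c f : rsum n (fun j => c * f j) = c * rsum n f.
Proof. induction n; simpl; [lra|]. rewrite IHn; lra. Qed.

Lemma rsum_const n c : rsum n (fun _ => c) = INR n * c.
Proof. induction n; simpl rsum; [simpl; lra|]. rewrite IHn, S_INR; lra. Qed.

Lemma rsum_le n f g : (forall j, (1 <= j <= n)%nat -> f j <= g j) -> rsum n f <= rsum n g.
Proof.
  induction n; intros H; simpl; [lra|].
  assert (rsum n f <= rsum n g) by (apply IHn; intros; apply H; lia).
  assert (f (S n) <= g (S n)) by (apply H; lia). lra.
Qed.

Lemma rsum_abs_bound n f B : (forall j, (1 <= j <= n)%nat -> Rabs (f j) <= B) ->
  Rabs (rsum n f) <= INR n * B.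
Proof.
  induction n; intros H; simpl rsum.
  - simpl. rewrite Rabs_R0. lra.
  - rewrite S_INR. eapply Rle_trans; [apply Rabs_triang|].
    assert (Rabs (rsum n f) <= INR n * B) by (apply IHn; intros; apply H; lia).
    assert (Rabs (f (S n)) <= B) by (apply H; lia). lra.
Qed.

Lemma rsum_swap n m (F : nat -> nat -> R) :
  rsum n (fun i => rsum m (fun j => F i j)) = rsum m (fun j => rsum n (fun i => F i j)).
Proof.
  induction n; simpl.
  - induction m; simpl; [lra|]. rewrite <- IHm; lra.
  - rewrite IHn. rewrite <- rsum_plus. reflexivity.
Qed.

Lemma rsum_split n k f : rsum (n + k) f = rsum n f + rsum k (fun j => f (n + j)%nat).
Proof.
  induction k; simpl.
  - rewrite Nat.add_0_r; lra.
  - rewrite Nat.add_succ_r. simpl. rewrite IHk. lra.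
Qed.

Lemma rsum_exists n f t : (1 <= n)%nat -> INR n * t <= rsum n f ->
  exists j, (1 <= j <= n)%nat /\ t <= f j.
Proof.
  intros Hn H. destruct (Classical_Prop.classic (exists j, (1 <= j <= n)%nat /\ t <= f j)) as [E|E]; auto.
  exfalso.
  assert (Hlt : forall j, (1 <= j <= n)%nat -> f j < t).
  { intros j Hj. destruct (Rlt_le_dec (f j) t); auto. exfalso; apply E; eauto. }
  clear E. revert H. destruct n; [lia|]. clear Hn.
  induction n; intros H.
  - simpl in H. simpl rsum in H. specialize (Hlt 1%nat ltac:(lia)). simpl in H. lra.
  - simpl rsum in H. rewrite S_INR in H.
    assert (f (S (S n)) < t) by (apply Hlt; lia).
    apply IHn.
    + intros; apply Hlt; lia.
    + simpl rsum. lra.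
Qed.

Definition zsum (a : Z) (n : nat) (h : Z -> R) : R := rsum n (fun j => h (a + Z.of_nat j)%Z).

Lemma zsum_split a n k h : zsum a (n + k) h = zsum a n h + zsum (a + Z.of_nat n) k h.
Proof.
  unfold zsum. rewrite rsum_split. f_equal. apply rsum_ext. intros j _.
  f_equal. lia.
Qed.

Lemma zsum_zero a n h : (forall j, (1 <= j <= n)%nat -> h (a + Z.of_nat j)%Z = 0) -> zsum a n h = 0.
Proof.
  intros H. unfold zsum. rewrite (rsum_ext _ _ (fun _ => 0)) by auto.
  rewrite rsum_const; lra.
Qed.

Lemma zsum_support a n N h :
  (forall z, (z < 1 \/ Z.of_nat N < z)%Z -> h z = 0) ->
  (a <= 0)%Z -> (Z.of_nat N <= a + Z.of_nat n)%Z ->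
  zsum a n h = zsum 0 N h.
Proof.
  intros Hs Ha Hn.
  set (p := Z.to_nat (- a)).
  assert (Hp : Z.of_nat p = (- a)%Z) by (unfold p; lia).
  replace n with (p + (N + (n - p - N)))%nat by lia.
  rewrite zsum_split, zsum_split.
  rewrite zsum_zero by (intros j Hj; apply Hs; lia).
  rewrite (zsum_zero (a + Z.of_nat p + Z.of_nat N)) by (intros j Hj; apply Hs; lia).
  replace (a + Z.of_nat p)%Z with 0%Z by lia. lra.
Qed.

Lemma zsum_window (phi : Z -> R) U s :
  (forall z, Rabs (phi z) <= 1) ->
  Rabs (zsum (Z.of_nat s) U phi - zsum 0 U phi) <= 2 * INR s.
Proof.
  intros Hb.
  assert (E1 := zsum_split 0 s U phi).
  assert (E2 := zsum_split 0 U s phi).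
  rewrite Nat.add_comm in E1. rewrite E1 in E2.
  replace (0 + Z.of_nat s)%Z with (Z.of_nat s) in E2 by lia.
  replace (0 + Z.of_nat U)%Z with (Z.of_nat U) in E2 by lia.
  assert (B1 : Rabs (zsum 0 s phi) <= INR s * 1) by (apply rsum_abs_bound; auto).
  assert (B2 : Rabs (zsum (Z.of_nat U) s phi) <= INR s * 1) by (apply rsum_abs_bound; auto).
  replace (zsum (Z.of_nat s) U phi - zsum 0 U phi) with (zsum (Z.of_nat U) s phi - zsum 0 s phi) by lra.
  eapply Rle_trans; [apply Rabs_triang|]. rewrite Rabs_Ropp. lra.
Qed.

Lemma zsum_minus a n f g : zsum a n f - zsum a n g = zsum a n (fun l => f l - g l).
Proof. unfold zsum. rewrite rsum_minus. reflexivity. Qed.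

Lemma zsum_abs_bound a n f B : (forall l, Rabs (f l) <= B) -> Rabs (zsum a n f) <= INR n * B.
Proof. intros H. unfold zsum. apply rsum_abs_bound. auto. Qed.

Lemma avg_bounds n h lo hi : (forall j, lo <= h j <= hi) ->
  INR n * lo <= rsum n h <= INR n * hi.
Proof.
  intros H. rewrite <- !rsum_const. split; apply rsum_le; intros j _; apply H.
Qed.

Lemma smoothing_eq q U V r f n :
  smoothing q U V r f n = / INR U * / INR V *
    rsum U (fun jm => rsum V (fun jk => f (n + Z.of_nat (q * r (n - Z.of_nat (q * jm))%Z * jk))%Z)).
Proof.
  unfold smoothing. cbv zeta. rewrite rsum_scal. unfold Rdiv. lra.
Qed.

Lemma smooth_sum_bound N q U V (r : Z -> nat) f rho :
  (1 <= U)%nat -> (1 <= V)%nat ->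
  (forall z, Rabs (f z) <= 1) ->
  (forall z, (z < 1 \/ Z.of_nat N < z)%Z -> f z = 0) ->
  zsum 0 N f = 0 ->
  (forall z, INR (r z) <= rho) ->
  Rabs (rsum N (fun j => smoothing q U V r f (Z.of_nat j))) <=
    INR q * INR U + (INR N + INR q * INR U) * (2 * rho * INR V) / INR U.
Proof.
  intros HU HV Hb Hs H0 Hr.
  set (W := fun jm (n : Z) => rsum V (fun jk => f (n + Z.of_nat (q * r (n - Z.of_nat (q * jm))%Z * jk))%Z)).
  assert (E1 : rsum N (fun j => smoothing q U V r f (Z.of_nat j)) =
     / INR U * / INR V * rsum U (fun jm => zsum 0 N (W jm))).
  { rewrite (rsum_ext _ _ (fun j => / INR U * / INR V * rsum U (fun jm => W jm (Z.of_nat j))))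
      by (intros; apply smoothing_eq).
    rewrite rsum_scal, rsum_swap. reflexivity. }
  set (QU := (q * U)%nat).
  set (K := fun jm (l : Z) => rsum V (fun jk => f (l + Z.of_nat (q * jm) + Z.of_nat (q * r l * jk))%Z)).
  assert (HK : forall jm l, Rabs (K jm l) <= INR V * 1).
  { intros; apply rsum_abs_bound; auto. }
  assert (HVpos : 0 < INR V) by (apply lt_0_INR; lia).
  assert (HUpos : 0 < INR U) by (apply lt_0_INR; lia).
  assert (Hrho : 0 <= rho) by (eapply Rle_trans; [apply pos_INR| apply (Hr 0%Z)]).
  assert (SA : forall jm, (1 <= jm <= U)%nat ->
    Rabs (zsum 0 N (W jm) - zsum (- Z.of_nat QU) (N + QU) (K jm)) <= INR QU * INR V).
  { intros jm Hjm.
    assert (Hm : (q * jm <= QU)%nat) by (unfold QU; apply Nat.mul_le_mono_l; lia).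
    assert (E : zsum 0 N (W jm) = zsum (- Z.of_nat (q * jm)) N (K jm)).
    { unfold zsum. apply rsum_ext. intros j _. unfold W, K. apply rsum_ext. intros jk _.
      replace (0 + Z.of_nat j - Z.of_nat (q * jm))%Z with (- Z.of_nat (q * jm) + Z.of_nat j)%Z by lia.
      f_equal. lia. }
    replace (N + QU)%nat with ((QU - (q * jm)) + (N + (q * jm)))%nat by lia.
    rewrite zsum_split, zsum_split.
    replace (- Z.of_nat QU + Z.of_nat (QU - (q * jm)))%Z with (- Z.of_nat (q * jm))%Z by lia.
    rewrite E.
    assert (B1 : Rabs (zsum (- Z.of_nat QU) (QU - (q * jm)) (K jm)) <= INR (QU - (q * jm)) * (INR V * 1))
      by (apply rsum_abs_bound; auto).
    assert (B2 : Rabs (zsum (- Z.of_nat (q * jm) + Z.of_nat N) (q * jm) (K jm)) <= INR (q * jm) * (INR V * 1))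
      by (apply rsum_abs_bound; auto).
    rewrite minus_INR in B1 by lia.
    replace (zsum (- Z.of_nat (q * jm)) N (K jm) -
      (zsum (- Z.of_nat QU) (QU - (q * jm)) (K jm) +
        (zsum (- Z.of_nat (q * jm)) N (K jm) + zsum (- Z.of_nat (q * jm) + Z.of_nat N) (q * jm) (K jm))))
      with (- (zsum (- Z.of_nat QU) (QU - (q * jm)) (K jm) + zsum (- Z.of_nat (q * jm) + Z.of_nat N) (q * jm) (K jm))) by ring.
    rewrite Rabs_Ropp. eapply Rle_trans; [apply Rabs_triang|]. nra. }
  assert (SA' : Rabs (rsum U (fun jm => zsum 0 N (W jm)) -
      rsum U (fun jm => zsum (- Z.of_nat QU) (N + QU) (K jm))) <= INR U * (INR QU * INR V)).
  { rewrite <- rsum_minus. apply rsum_abs_bound. auto. }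
  set (phi := fun (l : Z) (t : Z) => f (l + Z.of_nat q * t)%Z).
  assert (SB : rsum U (fun jm => zsum (- Z.of_nat QU) (N + QU) (K jm)) =
     zsum (- Z.of_nat QU) (N + QU) (fun l => rsum V (fun jk => zsum (Z.of_nat (r l * jk)) U (phi l)))).
  { unfold zsum at 1. rewrite rsum_swap. unfold zsum. apply rsum_ext. intros i _.
    unfold K. rewrite rsum_swap. apply rsum_ext. intros jk _. apply rsum_ext. intros jm _.
    unfold phi. f_equal. rewrite !Nat2Z.inj_mul. ring. }
  assert (SC : Rabs (zsum (- Z.of_nat QU) (N + QU) (fun l => rsum V (fun jk => zsum (Z.of_nat (r l * jk)) U (phi l)))
       - zsum (- Z.of_nat QU) (N + QU) (fun l => rsum V (fun jk => zsum 0 U (phi l))))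
       <= INR (N + QU) * (INR V * (2 * (rho * INR V)))).
  { rewrite zsum_minus. apply zsum_abs_bound. intros l.
    rewrite <- rsum_minus. apply rsum_abs_bound. intros jk Hjk.
    eapply Rle_trans; [apply zsum_window|].
    - intros; apply Hb.
    - rewrite mult_INR. apply Rmult_le_compat_l; [lra|].
      apply Rmult_le_compat; auto using pos_INR. apply le_INR; lia. }
  assert (SD : zsum (- Z.of_nat QU) (N + QU) (fun l => rsum V (fun jk => zsum 0 U (phi l))) = 0).
  { unfold zsum at 1.
    rewrite (rsum_ext _ _ (fun i => INR V * zsum 0 U (phi (- Z.of_nat QU + Z.of_nat i)%Z)))
      by (intros; apply rsum_const).
    rewrite rsum_scal. unfold zsum at 1. rewrite rsum_swap.
    rewrite (rsum_ext _ _ (fun jm => zsum (- Z.of_nat QU + Z.of_nat q * Z.of_nat jm) (N + QU) f)).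
    - rewrite (rsum_ext _ _ (fun jm => 0)). { rewrite rsum_const. ring. }
      intros jm Hjm. rewrite <- H0. apply zsum_support; auto.
      + assert (Z.of_nat q * Z.of_nat jm <= Z.of_nat QU)%Z.
        { unfold QU. rewrite Nat2Z.inj_mul. apply Z.mul_le_mono_nonneg_l; lia. }
        lia.
      + rewrite Nat2Z.inj_add. assert (0 <= Z.of_nat q * Z.of_nat jm)%Z by lia. lia.
    - intros jm _. unfold zsum. apply rsum_ext. intros i _. unfold phi. f_equal. ring. }
  rewrite E1. rewrite SB in SA'. rewrite SD in SC.
  set (T := rsum U (fun jm => zsum 0 N (W jm))) in *.
  set (T2 := zsum (- Z.of_nat QU) (N + QU) (fun l => rsum V (fun jk => zsum (Z.of_nat (r l * jk)) U (phi l)))) in *.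
  assert (HT : Rabs T <= INR U * (INR QU * INR V) + INR (N + QU) * (INR V * (2 * (rho * INR V)))).
  { replace T with ((T - T2) + (T2 - 0)) by ring. eapply Rle_trans; [apply Rabs_triang|]. lra. }
  unfold QU in HT. rewrite plus_INR, mult_INR in HT.
  rewrite Rabs_mult, Rabs_mult, Rabs_inv, Rabs_inv, !Rabs_pos_eq by lra.
  apply Rle_trans with (/ INR U * / INR V * (INR U * (INR q * INR U * INR V) + (INR N + INR q * INR U) * (INR V * (2 * (rho * INR V))))).
  { apply Rmult_le_compat_l; auto. apply Rmult_le_pos; left; apply Rinv_0_lt_compat; auto. }
  right. field. lra.
Qed.

Lemma exp_le' x y : x <= y -> exp x <= exp y.
Proof. intros [H|H]; [left; apply exp_increasing; auto| subst; lra]. Qed.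

Lemma ln_le' x y : 0 < x -> x <= y -> ln x <= ln y.
Proof. intros Hx [H|H]; [left; apply ln_increasing; auto| subst; lra]. Qed.

Lemma analysis (cs Rr NN eps del nu q U V rho : R) :
  0 < cs <= 1/8 -> 1 <= Rr -> 1 <= NN -> 0 < eps <= 1 -> 0 < del <= 1 -> 0 < nu -> 1 <= U ->
  NN >= Rpower (2 / (eps * del)) (20 / cs ^ 2 * Rr ^ 3) ->
  Rpower NN (cs / Rr ^ 2) <= U -> U <= 2 * Rpower NN (cs / Rr ^ 2) ->
  Rpower U (cs / Rr) <= V -> V <= 2 * Rpower U (cs / Rr) ->
  0 <= q -> q <= Rpower NN (1/4) ->
  rho = Rpower U (1/4) ->
  eps <= 1 * nu * del ->
  q * U + (NN + q * U) * (2 * rho * V) / U <= nu * del ^ 2 * NN / 8 /\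
  V * nu * del / 2 >= Rpower NN (cs ^ 2 / 2 / Rr ^ 3).
Proof.
  intros Hcs HR HN He Hd Hnu HU HNb HU1 HU2 HV1 HV2 Hq0 Hq Hrho Hen.
  unfold Rpower in *.
  set (LN := ln NN) in *. set (LU := ln U) in *.
  assert (HLN : 0 <= LN) by (unfold LN; rewrite <- ln_1; apply ln_le'; lra).
  assert (HLU : 0 <= LU) by (unfold LU; rewrite <- ln_1; apply ln_le'; lra).
  set (a := cs / Rr ^ 2) in *. set (b := cs / Rr) in *.
  set (th := cs ^ 2 / 2 / Rr ^ 3 / 10).
  assert (HR2 : 1 <= Rr ^ 2) by nra.
  assert (HR3 : 1 <= Rr ^ 3) by (simpl; nra).
  assert (Ha : 0 < a <= 1/8).
  { unfold a. split. apply Rdiv_lt_0_compat; lra.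
    apply Rle_trans with (cs / 1); [|lra]. apply Rmult_le_compat_l; [lra|].
    apply Rinv_le_contravar; lra. }
  assert (Hb : 0 < b <= 1/8).
  { unfold b. split. apply Rdiv_lt_0_compat; lra.
    apply Rle_trans with (cs / 1); [|lra]. apply Rmult_le_compat_l; [lra|].
    apply Rinv_le_contravar; lra. }
  assert (Hth : th = a * b / 20) by (unfold th, a, b; field; lra).
  assert (Hthp : 0 < th) by (rewrite Hth; nra).
  assert (HthC : th * (20 / cs ^ 2 * Rr ^ 3) = 1) by (unfold th; field; lra).
  assert (Hed : 0 < eps * del <= 1) by (split; nra).
  assert (Hln2 : ln 2 <= ln (2 / (eps * del))).
  { apply ln_le'; [lra|]. apply Rle_trans with (2 / 1); [lra|].
    apply Rmult_le_compat_l; [lra|]. apply Rinv_le_contravar; lra. }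
  assert (Hl2 := ln_lt_2).
  assert (H1 : ln (2 / (eps * del)) <= th * LN).
  { assert (ln (exp (20 / cs ^ 2 * Rr ^ 3 * ln (2 / (eps * del)))) <= LN).
    { unfold LN. apply ln_le'; [apply exp_pos| lra]. }
    rewrite ln_exp in H.
    replace (ln (2 / (eps * del))) with (th * (20 / cs ^ 2 * Rr ^ 3 * ln (2 / (eps * del)))).
    - apply Rmult_le_compat_l; lra.
    - rewrite <- Rmult_assoc, HthC. ring. }
  set (Zt := exp (th * LN)).
  assert (HZ : 2 / (eps * del) <= Zt).
  { unfold Zt. rewrite <- (exp_ln (2 / (eps * del))) by (apply Rdiv_lt_0_compat; lra).
    apply exp_le'. lra. }
  assert (HZed : 2 <= Zt * (eps * del)).
  { apply Rmult_le_compat_r with (r := eps * del) in HZ; [|lra].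
    unfold Rdiv in HZ. rewrite Rmult_assoc, Rinv_l in HZ; lra. }
  assert (HZ2 : 2 <= Zt) by nra.
  assert (HZp : 0 < Zt) by lra.
  assert (HLUa : a * LN <= LU).
  { unfold LU. rewrite <- (ln_exp (a * LN)). apply ln_le'; [apply exp_pos| lra]. }
  assert (P1a : 8 * q * U * Zt <= NN).
  { assert (EN : NN = Zt ^ 4 * exp (1/4 * LN) * exp (a * LN) * Zt * exp ((1 - 5 * th - 1/4 - a) * LN)).
    { unfold Zt. rewrite <- (exp_ln NN) at 1 by lra. fold LN.
      replace LN with (th * LN + th * LN + th * LN + th * LN + 1/4 * LN + a * LN + th * LN
          + (1 - 5 * th - 1/4 - a) * LN) at 1 by ring.
      rewrite !exp_plus. ring. }
    assert (Erest : 1 <= exp ((1 - 5 * th - 1/4 - a) * LN)).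
    { rewrite <- exp_0 at 1. apply exp_le'. apply Rmult_le_pos; [|lra]. rewrite Hth. assert (a * b <= 1/64) by nra. lra. }
    assert (HZ4 : 16 <= Zt ^ 4) by (replace (Zt ^ 4) with ((Zt * Zt) * (Zt * Zt)) by ring; assert (4 <= Zt * Zt) by nra; nra).
    assert (0 < exp (1/4 * LN)) by apply exp_pos.
    assert (0 < exp (a * LN)) by apply exp_pos.
    rewrite EN.
    assert (8 * q * U * Zt <= 16 * exp (1/4 * LN) * exp (a * LN) * Zt).
    { assert (q * U <= exp (1/4 * LN) * (2 * exp (a * LN))) by (apply Rmult_le_compat; lra). nra. }
    assert (16 * exp (1/4 * LN) * exp (a * LN) * Zt <= Zt ^ 4 * exp (1/4 * LN) * exp (a * LN) * Zt).
    { repeat apply Rmult_le_compat_r; lra. }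
    assert (0 <= Zt ^ 4 * exp (1/4 * LN) * exp (a * LN) * Zt) by (repeat apply Rmult_le_pos; lra).
    nra. }
  set (Y := exp (b / 20 * LU)).
  assert (HY : Zt <= Y).
  { unfold Zt, Y. apply exp_le'. rewrite Hth.
    apply Rle_trans with (b / 20 * (a * LN)); [right; unfold Rdiv; ring| apply Rmult_le_compat_l; lra]. }
  assert (P1b : 32 * rho * V * Zt <= U).
  { assert (EU : U = Y ^ 6 * exp (1/4 * LU) * exp (b * LU) * Y * exp ((1 - 7 * b / 20 - 1/4 - b) * LU)).
    { unfold Y. rewrite <- (exp_ln U) at 1 by lra. fold LU.
      replace LU with (b/20 * LU + b/20 * LU + b/20 * LU + b/20 * LU + b/20 * LU + b/20 * LU
          + 1/4 * LU + b * LU + b/20 * LU + (1 - 7 * b / 20 - 1/4 - b) * LU) at 1 by field.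
      rewrite !exp_plus. ring. }
    assert (Erest : 1 <= exp ((1 - 7 * b / 20 - 1/4 - b) * LU)).
    { rewrite <- exp_0 at 1. apply exp_le'. apply Rmult_le_pos; lra. }
    assert (HY6 : 64 <= Y ^ 6) by (replace (Y ^ 6) with ((Y * Y) * (Y * Y) * (Y * Y)) by ring; assert (4 <= Y * Y) by nra; assert (16 <= (Y * Y) * (Y * Y)) by nra; nra).
    assert (0 < exp (1/4 * LU)) by apply exp_pos.
    assert (0 < exp (b * LU)) by apply exp_pos.
    rewrite Hrho. rewrite EU at 1.
    assert (32 * exp (1/4 * LU) * V * Zt <= 64 * exp (1/4 * LU) * exp (b * LU) * Y).
    { assert (0 < exp (b * LU)) by apply exp_pos.
      assert (V * Zt <= (2 * exp (b * LU)) * Y) by (apply Rmult_le_compat; lra).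
      replace (32 * exp (1/4 * LU) * V * Zt) with ((32 * exp (1/4 * LU)) * (V * Zt)) by ring.
      replace (64 * exp (1/4 * LU) * exp (b * LU) * Y) with ((32 * exp (1/4 * LU)) * (2 * exp (b * LU) * Y)) by ring.
      apply Rmult_le_compat_l; lra. }
    assert (64 * exp (1/4 * LU) * exp (b * LU) * Y <= Y ^ 6 * exp (1/4 * LU) * exp (b * LU) * Y).
    { repeat apply Rmult_le_compat_r; lra. }
    assert (0 <= Y ^ 6 * exp (1/4 * LU) * exp (b * LU) * Y) by (repeat apply Rmult_le_pos; lra).
    nra. }
  split.
  - assert (Hnd : 2 <= Zt * (nu * del ^ 2)).
    { apply Rle_trans with (Zt * (eps * del)); auto. apply Rmult_le_compat_l; [lra|]. nra. }
    assert (HqU : q * U <= NN / (8 * Zt)).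
    { apply Rmult_le_reg_r with (8 * Zt); [lra|]. field_simplify; lra. }
    assert (HrV : 2 * rho * V / U <= 1 / (16 * Zt)).
    { apply Rmult_le_reg_r with (16 * Zt * U); [nra|]. field_simplify; nra. }
    assert (HrV0 : 0 <= 2 * rho * V / U).
    { rewrite Hrho. apply Rmult_le_pos; [|left; apply Rinv_0_lt_compat; lra].
      assert (0 < exp (1/4 * LU)) by apply exp_pos. assert (0 < exp (b * LU)) by apply exp_pos. nra. }
    assert (HqU2 : q * U <= NN).
    { apply Rle_trans with (NN / (8 * Zt)); auto. apply Rmult_le_reg_r with (8 * Zt); [lra|].
      field_simplify; nra. }
    replace ((NN + q * U) * (2 * rho * V) / U) with ((NN + q * U) * (2 * rho * V / U)) by (field; lra).
    apply Rle_trans with (NN / (8 * Zt) + (2 * NN) * (1 / (16 * Zt))).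
    { apply Rplus_le_compat; auto. assert (0 <= q * U) by nra. apply Rmult_le_compat; lra. }
    apply Rmult_le_reg_r with (8 * Zt); [lra|].
    replace ((NN / (8 * Zt) + 2 * NN * (1 / (16 * Zt))) * (8 * Zt)) with (2 * NN) by (field; lra).
    replace (nu * del ^ 2 * NN / 8 * (8 * Zt)) with (NN * (Zt * (nu * del ^ 2))) by field. nra.
  - assert (Hnd : 2 <= Zt * (nu * del)).
    { apply Rle_trans with (Zt * (eps * del)); auto. apply Rmult_le_compat_l; [lra|]. nra. }
    assert (E10 : cs ^ 2 / 2 / Rr ^ 3 * LN = 10 * (th * LN)) by (unfold th; field; lra).
    rewrite E10.
    assert (HbU : exp (11 * (th * LN)) <= exp (b * LU)).
    { apply exp_le'. apply Rle_trans with (b * (a * LN)).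
      - rewrite Hth. assert (0 <= th * LN) by (apply Rmult_le_pos; lra).
        replace (b * (a * LN)) with (20 * (a * b / 20 * LN)) by field. rewrite <- Hth. lra.
      - apply Rmult_le_compat_l; lra. }
    replace (11 * (th * LN)) with (10 * (th * LN) + th * LN) in HbU by ring.
    rewrite exp_plus in HbU. fold Zt in HbU.
    assert (0 < exp (10 * (th * LN))) by apply exp_pos.
    apply Rle_ge. nra.
Qed.

Theorem proposition9p6 :
  forall (lam : list Z), Forall (fun l => l <> 0%Z) lam ->
  forall cstar : R, 0 < cstar <= 1 / 8 ->
  exists C c c' : R, 0 < C /\ 0 < c /\ 0 < c' /\
  forall (N : nat) (M : Z) (eps delta nu : R) (Rn : nat)
         (x y : nat -> Z) (A : Z -> bool)
         (q U V : nat) (r : Z -> nat),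
    (1 <= N)%nat ->
    prime M ->
    (2 * sum_absZ lam * Z.of_nat N <= M <= 2 * (2 * sum_absZ lam * Z.of_nat N))%Z ->
    0 < eps <= 1 -> 0 < delta <= 1 -> 0 < nu -> (1 <= Rn)%nat ->
    (forall i : nat, (1 <= i <= Rn)%nat ->
       (0 <= x i < M)%Z /\ (0 <= y i < M ^ 2)%Z) ->
    INR N >= Rpower (2 / (eps * delta)) (C * INR Rn ^ 3) ->
    linearization_system cstar eps delta Rn N
      (fun i => phase M (x i) (y i)) q U V r ->
    (forall n : Z, A n = true -> (1 <= n <= Z.of_nat N)%Z) ->
    delta = cardA A N / INR N ->
    (L2norm N (fun n => smoothing q U V r (balanced A N delta) n / delta)) ^ 2 >= nu ->
    eps <= c * nu * delta ->
    exists (u : Z) (d : nat) (L : nat),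
      (1 <= d)%nat /\ (1 <= L)%nat /\
      (forall j : nat, (1 <= j <= L)%nat ->
         (1 <= u + Z.of_nat d * Z.of_nat j <= Z.of_nat N)%Z) /\
      rsum L (fun j => indR (A (u + Z.of_nat d * Z.of_nat j)%Z)) / INR L
        >= (1 + nu / 2) * delta /\
      INR L >= Rpower (INR N) (c' / INR Rn ^ 3).
Proof.
  intros lam _ cs Hcs.
  exists (20 / cs ^ 2), 1, (cs ^ 2 / 2).
  split; [apply Rdiv_lt_0_compat; nra|]. split; [lra|]. split; [nra|].
  intros N M eps delta nu Rn x y A q U V r HN _ _ He Hd Hnu HRn _ HNb Hlin HA Hdelta HL2 Hen.
  destruct Hlin as (Hq & HU & HV & Hr1 & HU1 & HU2 & HV1 & HV2 & Hq2 & Hr2 & _).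
  set (f := balanced A N delta) in *.
  assert (Fb : forall z, - delta <= f z <= 1 - delta).
  { intros z. unfold f, balanced. destruct (inN N z); [destruct (A z); unfold indR|]; lra. }
  assert (Fabs : forall z, Rabs (f z) <= 1) by (intros z; specialize (Fb z); apply Rabs_le; lra).
  assert (Fs : forall z, (z < 1 \/ Z.of_nat N < z)%Z -> f z = 0).
  { intros z Hz. unfold f, balanced, inN.
    destruct ((1 <=? z)%Z && (z <=? Z.of_nat N)%Z)%bool eqn:E; [|reflexivity].
    apply Bool.andb_true_iff in E. destruct E as [E1 E2]. apply Z.leb_le in E1. apply Z.leb_le in E2. lia. }
  assert (HNpos : 0 < INR N) by (apply lt_0_INR; lia).
  assert (F0 : zsum 0 N f = 0).
  { unfold zsum. rewrite (rsum_ext _ _ (fun j => indR (A (Z.of_nat j)) - delta)).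
    - rewrite rsum_minus, rsum_const. fold (cardA A N). rewrite Hdelta. field. lra.
    - intros j Hj. unfold f, balanced. replace (inN N (0 + Z.of_nat j)) with true. reflexivity.
      symmetry. unfold inN. apply Bool.andb_true_iff. split; apply Z.leb_le; lia. }
  set (rho := Rpower (INR U) (1/4)).
  assert (HS := smooth_sum_bound N q U V r f rho HU HV Fabs Fs F0 Hr2).
  assert (HUr : 1 <= INR U) by (apply (le_INR 1); lia).
  assert (HVr : 1 <= INR V) by (apply (le_INR 1); lia).
  assert (HRr : 1 <= INR Rn) by (apply (le_INR 1); lia).
  assert (HNr : 1 <= INR N) by (apply (le_INR 1); lia).
  destruct (analysis cs (INR Rn) (INR N) eps delta nu (INR q) (INR U) (INR V) rho) as [P1 P2];
    auto using pos_INR.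
  set (g := fun n => smoothing q U V r f n).
  assert (Gb : forall n, - delta <= g n <= 1 - delta).
  { intros n. unfold g. rewrite smoothing_eq.
    set (F := fun jm => rsum V (fun jk => f (n + Z.of_nat (q * r (n - Z.of_nat (q * jm))%Z * jk))%Z)).
    assert (HF : forall jm, INR V * - delta <= F jm <= INR V * (1 - delta)).
    { intros jm. apply avg_bounds. intros; apply Fb. }
    destruct (avg_bounds U F _ _ HF) as [L1 L2].
    split.
    - apply Rmult_le_reg_l with (INR U * INR V); [nra|].
      replace (INR U * INR V * (/ INR U * / INR V * rsum U F)) with (rsum U F) by (field; lra). nra.
    - apply Rmult_le_reg_l with (INR U * INR V); [nra|].
      replace (INR U * INR V * (/ INR U * / INR V * rsum U F)) with (rsum U F) by (field; lra). nra. }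
  set (S := rsum N (fun j => g (Z.of_nat j))).
  assert (Hsq : nu * delta ^ 2 * INR N <= rsum N (fun j => g (Z.of_nat j) ^ 2)).
  { unfold L2norm in HL2. fold f in HL2.
    rewrite pow2_sqrt in HL2.
    2: { apply Rmult_le_pos. unfold Rdiv; rewrite Rmult_1_l; left; apply Rinv_0_lt_compat; lra.
         rewrite <- (Rmult_0_r (INR N)), <- rsum_const. apply rsum_le. intros; apply pow2_ge_0. }
    rewrite (rsum_ext _ _ (fun j => / delta ^ 2 * g (Z.of_nat j) ^ 2)) in HL2.
    2: { intros j _. rewrite pow2_abs. unfold g. field. lra. }
    rewrite rsum_scal in HL2.
    set (Q := rsum N (fun j => g (Z.of_nat j) ^ 2)) in *.
    assert (HD : 0 < delta ^ 2) by nra.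
    apply Rge_le in HL2.
    apply Rmult_le_compat_r with (r := delta ^ 2 * INR N) in HL2; [|nra].
    replace (1 / INR N * (/ delta ^ 2 * Q) * (delta ^ 2 * INR N)) with Q in HL2 by (field; lra).
    lra. }
  destruct (classic (exists j, (1 <= j <= N)%nat /\ nu * delta / 2 <= g (Z.of_nat j)))
    as [[n0 [Hn0 Hg0]]|Hno].
  2: { exfalso.
       set (K1 := Rmin (nu * delta / 2) 1).
       assert (HK1 : 0 < K1 <= nu * delta / 2 /\ K1 <= 1).
       { unfold K1. split; [split|]. apply Rmin_glb_lt; nra. apply Rmin_l. apply Rmin_r. }
       assert (Hpt : forall j, (1 <= j <= N)%nat ->
                g (Z.of_nat j) ^ 2 <= K1 * delta + (K1 - delta) * g (Z.of_nat j)).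
       { intros j Hj. assert (g (Z.of_nat j) < nu * delta / 2).
         { destruct (Rlt_le_dec (g (Z.of_nat j)) (nu * delta / 2)); auto.
           exfalso; apply Hno; eauto. }
         assert (g (Z.of_nat j) <= K1).
         { unfold K1. apply Rmin_glb; [lra|]. specialize (Gb (Z.of_nat j)). lra. }
         specialize (Gb (Z.of_nat j)). nra. }
       apply rsum_le in Hpt. rewrite rsum_plus, rsum_const, rsum_scal in Hpt. fold S in Hpt.
       assert (HSb : Rabs S <= nu * delta ^ 2 * INR N / 8) by (unfold S, g; lra).
       assert (Rabs ((K1 - delta) * S) <= Rabs S).
       { rewrite Rabs_mult. rewrite <- (Rmult_1_l (Rabs S)) at 2.
         apply Rmult_le_compat_r; [apply Rabs_pos|]. apply Rabs_le. lra. }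
       assert ((K1 - delta) * S <= Rabs S) by (eapply Rle_trans; [apply Rle_abs|]; eauto).
       assert (INR N * (K1 * delta) <= INR N * (nu * delta / 2 * delta)).
       { apply Rmult_le_compat_l; [lra|]. apply Rmult_le_compat_r; lra. }
       assert (0 < nu * delta ^ 2 * INR N) by (apply Rmult_lt_0_compat; [|lra]; apply Rmult_lt_0_compat; nra).
       nra. }
  unfold g in Hg0. rewrite smoothing_eq in Hg0.
  set (n0' := Z.of_nat n0) in *.
  set (F := fun jm => rsum V (fun jk => f (n0' + Z.of_nat (q * r (n0' - Z.of_nat (q * jm))%Z * jk))%Z)) in Hg0.
  assert (HFU : INR U * (INR V * (nu * delta / 2)) <= rsum U F).
  { apply Rmult_le_compat_l with (r := INR U * INR V) in Hg0; [|nra].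
    replace (INR U * INR V * (/ INR U * / INR V * rsum U F)) with (rsum U F) in Hg0 by (field; lra).
    lra. }
  destruct (rsum_exists U F _ HU HFU) as [jm [Hjm HFj]].
  unfold F in HFj.
  set (d := (q * r (n0' - Z.of_nat (q * jm))%Z)%nat) in HFj.
  assert (Hd1 : (1 <= d)%nat).
  { unfold d. specialize (Hr1 (n0' - Z.of_nat (q * jm))%Z). nia. }
  assert (Hdz : (0 < Z.of_nat d)%Z) by lia.
  assert (Hn0N : (Z.of_nat n0 <= Z.of_nat N)%Z) by lia.
  set (t := ((Z.of_nat N - n0') / Z.of_nat d)%Z).
  assert (Ht0 : (0 <= t)%Z) by (apply Z.div_pos; lia).
  assert (Ht1 : (Z.of_nat d * t <= Z.of_nat N - n0')%Z) by (apply Z.mul_div_le; lia).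
  assert (Ht2 : (Z.of_nat N - n0' < Z.of_nat d * Z.succ t)%Z) by (apply Z.mul_succ_div_gt; lia).
  set (b := Nat.min V (Z.to_nat t)).
  assert (Hin : forall j, (1 <= j <= b)%nat -> (1 <= n0' + Z.of_nat d * Z.of_nat j <= Z.of_nat N)%Z).
  { intros j Hj. assert (Z.of_nat j <= t)%Z by lia.
    assert (Z.of_nat d * Z.of_nat j <= Z.of_nat d * t)%Z by (apply Z.mul_le_mono_nonneg_l; lia).
    nia. }
  assert (Hout : forall j, (b < j <= V)%nat -> (Z.of_nat N < n0' + Z.of_nat d * Z.of_nat j)%Z).
  { intros j Hj. assert (Z.succ t <= Z.of_nat j)%Z by lia.
    assert (Z.of_nat d * Z.succ t <= Z.of_nat d * Z.of_nat j)%Z by (apply Z.mul_le_mono_nonneg_l; lia).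
    lia. }
  assert (Hbv : (b <= V)%nat) by lia.
  assert (Esum : rsum V (fun jk => f (n0' + Z.of_nat (d * jk))%Z) =
     rsum b (fun j => indR (A (n0' + Z.of_nat d * Z.of_nat j)%Z)) - INR b * delta).
  { replace V with (b + (V - b))%nat at 1 by lia. rewrite rsum_split.
    rewrite (rsum_ext (V - b) _ (fun _ => 0)).
    2: { intros j Hj. apply Fs. right. rewrite Nat2Z.inj_mul. apply Hout. lia. }
    rewrite rsum_const, Rmult_0_r, Rplus_0_r, <- (rsum_const b delta), <- rsum_minus.
    apply rsum_ext. intros j Hj. unfold f, balanced.
    rewrite Nat2Z.inj_mul. replace (inN N (n0' + Z.of_nat d * Z.of_nat j)) with true; [reflexivity|].
    symmetry. unfold inN. specialize (Hin j Hj). apply Bool.andb_true_iff. split; apply Z.leb_le; lia. }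
  fold d in HFj. rewrite Esum in HFj.
  set (Sg := rsum b (fun j => indR (A (n0' + Z.of_nat d * Z.of_nat j)%Z))) in *.
  assert (HSg : Sg <= INR b).
  { unfold Sg. rewrite <- (Rmult_1_r (INR b)), <- rsum_const. apply rsum_le.
    intros; unfold indR; destruct (A _); lra. }
  assert (HbV : INR b <= INR V) by (apply le_INR; lia).
  assert (Hpos : 0 < INR V * (nu * delta / 2)) by (apply Rmult_lt_0_compat; nra).
  assert (Hb1 : (1 <= b)%nat).
  { destruct b as [|b']; [|lia]. exfalso. simpl in Sg. unfold Sg in HFj. simpl in HFj. lra. }
  assert (Hbr : 0 < INR b) by (apply lt_0_INR; lia).
  exists n0', d, b. split; [exact Hd1|]. split; [exact Hb1|]. split; [exact Hin|]. split.
  - apply Rle_ge. apply Rmult_le_reg_r with (INR b); [lra|].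
    fold Sg. replace (Sg / INR b * INR b) with Sg by (field; lra).
    assert (INR b * (nu * delta / 2) <= INR V * (nu * delta / 2)) by (apply Rmult_le_compat_r; nra).
    nra.
  - apply Rge_trans with (INR V * nu * delta / 2); [|exact P2]. apply Rle_ge. nra.
Qed.
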